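(* Let $p\ge2$, $X=\{0,1,\dots,p\}$, and for $w\in X^\infty$ let $I_w=\{z\in X^\infty:\Gamma^p_z\text{ and }\Gamma^p_w\text{ are isomorphic}\}$. Then $\nu(I_w)=0$ for every $w\in X^\infty$.
   Context: $\mathcal G_{S_p}$ is the group generated by $e_1,\dots,e_p$ acting on $X^\infty$ by $e_i(0x)=i\,e_i(x)$, $e_i(ix)=0x$, $e_i(jx)=jx$ for $j\notin\{0,i\}$; $\Gamma^p_w$ is the infinite Schreier graph with vertex set the orbit of $w$ and an edge joining $x$ and $e_i(x)$ for each vertex $x$ and each $i$; isomorphism is isomorphism of unrooted graphs. $\nu$ is the uniform (Bernoulli product) measure on $X^\infty$. *)

(* Defs.v *)
From mathcomp Require Import all_boot all_order all_algebra.
From Stdlib Require Import Relations.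
Set Implicit Arguments. Unset Strict Implicit. Unset Printing Implicit Defensive.
Import Order.TTheory GRing.Theory Num.Theory.

(* Alphabet X = {0,1,...,p} is 'I_p.+1 ; X^infty = infinite sequences. *)
Definition word (p : nat) := nat -> 'I_p.+1.

(* The generator e_i, written out pointwise: it is the unique map with
   e_i(0x) = i e_i(x), e_i(ix) = 0x, e_i(jx) = jx (j notin {0,i}). *)
Definition gen (p : nat) (i : 'I_p.+1) (x : word p) : word p :=
  fun k => if [forall m : 'I_k, x m == ord0]
           then (if x k == ord0 then i else if x k == i then ord0 else x k)
           else x k.

Definition step (p : nat) (x y : word p) : Prop :=
  exists i : 'I_p.+1, (0 < i)%N /\ (y = gen i x \/ x = gen i y).

Definition in_orbit (p : nat) (w z : word p) : Prop :=
  clos_refl_trans (word p) (@step p) w z.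

Definition bij_on (T U : Type) (A : T -> Prop) (B : U -> Prop) (f : T -> U) :=
  [/\ forall x, A x -> B (f x),
      forall x y, A x -> A y -> f x = f y -> x = y
    & forall y, B y -> exists x, A x /\ f x = y].

(* Edges of Gamma^p_w: pairs (x, i) with x in the orbit of w, 1 <= i <= p;
   the edge (x, i) joins x and e_i(x) (multigraph, loops allowed). *)
Definition is_edge (p : nat) (w : word p) (E : word p * 'I_p.+1) : Prop :=
  in_orbit w E.1 /\ (0 < E.2)%N.

(* Isomorphism of unrooted (multi)graphs Gamma^p_z ~ Gamma^p_w:
   a vertex bijection f and an edge bijection g preserving endpoints
   (as unordered pairs). *)
Definition schreier_iso (p : nat) (z w : word p) : Prop :=
  exists (f : word p -> word p) (g : word p * 'I_p.+1 -> word p * 'I_p.+1),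
    [/\ bij_on (in_orbit z) (in_orbit w) f,
        bij_on (@is_edge p z) (@is_edge p w) g
      & forall E, is_edge z E ->
          let x := E.1 in let i := E.2 in
          let y := (g E).1 in let j := (g E).2 in
          (f x = y /\ f (gen i x) = gen j y) \/
          (f x = gen j y /\ f (gen i x) = y)].

Definition Iset (p : nat) (w : word p) : word p -> Prop :=
  fun z => schreier_iso z w.

Definition cylinder (p : nat) (u : seq 'I_p.+1) (x : word p) : Prop :=
  forall k, (k < size u)%N -> x k = nth ord0 u k.

(* nu-null sets for the uniform Bernoulli measure nu on X^infty:
   outer measure zero, i.e. for every eps > 0 the set is covered by countably
   many cylinders [u_n] with sum_n nu([u_n]) = sum_n (p+1)^(-|u_n|) <= eps. *)
Definition nu_null (p : nat) (A : word p -> Prop) : Prop :=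
  forall eps : rat, (0 < eps)%R ->
    exists U : nat -> seq 'I_p.+1,
      (forall x, A x -> exists n, cylinder (U n) x) /\
      (forall N : nat, (\sum_(n < N) (((p.+1) ^ size (U n))%:R)^-1 <= eps)%R).

(* Main.v *)
Require Import Defs.
From mathcomp Require Import all_boot all_order all_algebra.
From mathcomp Require Import zify ring lra.
From Stdlib Require Import Relations FunctionalExtensionality ClassicalEpsilon Classical.
Set Implicit Arguments. Unset Strict Implicit. Unset Printing Implicit Defensive.
Arguments rt_trans {A R x y z}. Arguments rt_step {A R x y}. Arguments rt_refl {A R x}.

Definition wcons {p} (a : 'I_p.+1) (y : word p) : word p :=
  fun k => if k is k'.+1 then y k' else a.
Definition shift {p} (x : word p) : word p := fun k => x k.+1.

Lemma wcons_shift p (x : word p) : wcons (x 0) (shift x) = x.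
Proof. by apply: functional_extensionality => -[|k]. Qed.

Lemma shift_wcons p a (y : word p) : shift (wcons a y) = y.
Proof. by []. Qed.

Lemma wcons_inj p a b (y y' : word p) : wcons a y = wcons b y' -> a = b /\ y = y'.
Proof. by move=> e; split; [apply: (congr1 (fun f => f 0) e) | apply: (congr1 shift e)]. Qed.

Lemma forall_iota (k : nat) (P : pred nat) :
  [forall m : 'I_k, P m] = all P (iota 0 k).
Proof.
apply/forallP/allP => [H x|H m].
  by rewrite mem_iota add0n => /andP[_ xk]; exact: (H (Ordinal xk)).
by apply: H; rewrite mem_iota add0n /=.
Qed.

Lemma forall_iotaw p (x : word p) (c : 'I_p.+1) (k : nat) :
  [forall m : 'I_k, x m == c] = all (fun m => x m == c) (iota 0 k).
Proof. exact: (forall_iota k (fun m => x m == c)). Qed.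

Lemma all_iotaS (k : nat) (P : pred nat) :
  all P (iota 0 k.+1) = P 0 && all (fun m => P m.+1) (iota 0 k).
Proof.
by rewrite /= -(addn0 1) iotaDl all_map.
Qed.

Definition sw {p} (i a : 'I_p.+1) : 'I_p.+1 :=
  if a == ord0 then i else if a == i then ord0 else a.

Lemma gen_cons p (i a : 'I_p.+1) (y : word p) :
  gen i (wcons a y) = if a == ord0 then wcons i (gen i y)
                      else if a == i then wcons ord0 y else wcons a y.
Proof.
apply: functional_extensionality => -[|k].
  rewrite /gen /=.
  have -> : [forall m : 'I_0, wcons a y m == ord0] by apply/forallP => -[].
  by case: ifP => // _; case: ifP.
rewrite /gen forall_iotaw all_iotaS /=.
case: (boolP (a == ord0)) => Ha /=; first by rewrite forall_iotaw.
by case: ifP.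
Qed.

Definition geninv {p} (i : 'I_p.+1) (x : word p) : word p :=
  fun k => if [forall m : 'I_k, x m == i]
           then (if x k == i then ord0 else if x k == ord0 then i else x k)
           else x k.

Lemma geninv_cons p (i a : 'I_p.+1) (y : word p) :
  geninv i (wcons a y) = if a == i then wcons ord0 (geninv i y)
                      else if a == ord0 then wcons i y else wcons a y.
Proof.
apply: functional_extensionality => -[|k].
  rewrite /geninv /=.
  have -> : [forall m : 'I_0, wcons a y m == i] by apply/forallP => -[].
  by case: ifP => // _; case: ifP.
rewrite /geninv forall_iotaw all_iotaS /=.
case: (boolP (a == i)) => Ha /=; first by rewrite forall_iotaw.
by case: ifP.
Qed.

Ltac simp_ifs := rewrite ?eqxx /=; repeat (match goal with
  | H : is_true (?a != ?b) |- context [?a == ?b] => rewrite (negbTE H)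
  | H : is_true (?a != ?b) |- context [?b == ?a] => rewrite eq_sym (negbTE H)
  end; rewrite ?eqxx /=).

Lemma geninvK p (i : 'I_p.+1) : i != ord0 -> forall x : word p, geninv i (gen i x) = x.
Proof.
move=> i0 x; apply: functional_extensionality => k.
elim: k x => [|k IH] x; rewrite -(wcons_shift x); move: (x 0) (shift x) => a y;
 rewrite gen_cons; (case: (eqVneq a ord0) => [->|Ha]; [|case: (eqVneq a i) => [->|Hai]]);
 rewrite ?geninv_cons; simp_ifs; rewrite ?geninv_cons; simp_ifs => //=; try rewrite IH.
Qed.

Lemma genK p (i : 'I_p.+1) : i != ord0 -> forall x : word p, gen i (geninv i x) = x.
Proof.
move=> i0 x; apply: functional_extensionality => k.
elim: k x => [|k IH] x; rewrite -(wcons_shift x); move: (x 0) (shift x) => a y;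
 rewrite geninv_cons; (case: (eqVneq a ord0) => [->|Ha]; [|case: (eqVneq a i) => [->|Hai]]);
 rewrite ?gen_cons; simp_ifs; rewrite ?gen_cons; simp_ifs => //=; try rewrite IH.
Qed.

Lemma pos_ord p (i : 'I_p.+1) : (0 < i)%N = (i != ord0).
Proof. by rewrite lt0n; congr negb; apply/eqP/eqP => [h|->//]; apply: val_inj. Qed.

Lemma step_sym p (x y : word p) : step x y -> step y x.
Proof. by case=> i [hi [e|e]]; exists i; split => //; [right|left]. Qed.

Lemma crt_sym p (x y : word p) : clos_refl_trans _ (@step p) x y -> clos_refl_trans _ (@step p) y x.
Proof.
elim=> [a b /step_sym h|a|a b c _ h1 _ h2]; [exact: rt_step|exact: rt_refl|exact: rt_trans h2 h1].
Qed.

Lemma orbit_step p (z x y : word p) : Defs.in_orbit z x -> step x y -> Defs.in_orbit z y.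
Proof. by move=> h s; apply: rt_trans h _; apply: rt_step. Qed.

Lemma gen_fix p (i : 'I_p.+1) (x : word p) : x 0 != ord0 -> x 0 != i -> gen i x = x.
Proof.
move=> h1 h2; rewrite -(wcons_shift x) gen_cons.
by rewrite (negbTE h1) (negbTE h2).
Qed.

Lemma loop_iff p (hp : (2 <= p)%N) (x : word p) : step x x <-> x 0 != ord0.
Proof.
split.
  case=> i [hi e]; have {e} e : gen i x = x by case: e => <-.
  move: e; rewrite -(wcons_shift x) gen_cons /=; move: (x 0) (shift x) => a y.
  have i0 : i != ord0 by rewrite -pos_ord.
  case: (eqVneq a ord0) => [->|h0] //=.
    by move/wcons_inj => [e _]; move: i0; rewrite e eqxx.
move=> h0.
have h1 : (1 < p.+1)%N by apply: leq_trans hp _.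
have h2 : (2 < p.+1)%N by [].
set i : 'I_p.+1 := if x 0 == inord 1 then inord 2 else inord 1.
have ipos : (0 < i)%N by rewrite /i; case: ifP => _; rewrite inordK.
have ix : x 0 != i.
  rewrite /i; case: ifP => [/eqP ->|/negbT //].
  by apply/eqP => /(congr1 val); rewrite /= !inordK.
by exists i; split => //; left; rewrite gen_fix.
Qed.

Lemma step_nonhub p (k : 'I_p.+1) (c a : word p) : k != ord0 ->
  step (wcons k c) (wcons ord0 a) -> a = c \/ c = gen k a.
Proof.
move=> k0 [i [hi [e|e]]].
  move: e; rewrite gen_cons (negbTE k0).
  case: (eqVneq k i) => [_|ki] /wcons_inj [e1 e2] //; first by left.
  by move: k0; rewrite -e1 eqxx.
move: e; rewrite gen_cons eqxx => /wcons_inj [<- ->]; by right.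
Qed.

Lemma shift_gen p (i : 'I_p.+1) (x : word p) :
  shift (gen i x) = if x 0 == ord0 then gen i (shift x) else shift x.
Proof.
rewrite -{1}(wcons_shift x) gen_cons.
by case: ifP => // _; case: ifP.
Qed.

Lemma orbit_shift p (z x : word p) : Defs.in_orbit z x -> Defs.in_orbit (shift z) (shift x).
Proof.
elim=> [a b [i [hi [e|e]]]|a|a b c _ h1 _ h2]; last 2 first.
- exact: rt_refl.
- exact: rt_trans h1 h2.
- rewrite e shift_gen; case: ifP => _; last exact: rt_refl.
  by apply: rt_step; exists i; split => //; left.
- rewrite e shift_gen; case: ifP => _; last exact: rt_refl.
  by apply: rt_step; exists i; split => //; right.
Qed.

Lemma cons_any p (a b : 'I_p.+1) (y : word p) :
  clos_refl_trans _ (@step p) (wcons a y) (wcons b y).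
Proof.
have toz : forall c, clos_refl_trans _ (@step p) (wcons c y) (wcons ord0 y).
  move=> c; case: (eqVneq c ord0) => [->|c0]; first exact: rt_refl.
  apply: rt_step; exists c; split; first by rewrite pos_ord.
  by left; rewrite gen_cons (negbTE c0) eqxx.
apply: rt_trans (toz a) (crt_sym (toz b)).
Qed.

Lemma cons_step p (y y' : word p) : step y y' ->
  clos_refl_trans _ (@step p) (wcons ord0 y) (wcons ord0 y').
Proof.
have H : forall (u : word p) (i : 'I_p.+1), (0 < i)%N ->
   clos_refl_trans _ (@step p) (wcons ord0 u) (wcons ord0 (gen i u)).
  move=> u i hi; apply: rt_trans (_ : clos_refl_trans _ _ _ (wcons i (gen i u))) _.
    by apply: rt_step; exists i; split => //; left; rewrite gen_cons eqxx.
  exact: cons_any.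
case=> i [hi [->|->]]; first exact: H.
exact: crt_sym (H _ _ hi).
Qed.

Lemma orbit_cons p (z y : word p) (a : 'I_p.+1) :
  Defs.in_orbit (shift z) y -> Defs.in_orbit z (wcons a y).
Proof.
rewrite /Defs.in_orbit => h.
have h0 : clos_refl_trans _ (@step p) (wcons ord0 (shift z)) (wcons ord0 y).
  elim: h => [u v s|u|u v t _ h1 _ h2]; [exact: cons_step|exact: rt_refl|exact: rt_trans h1 h2].
apply: rt_trans (_ : clos_refl_trans _ _ _ (wcons ord0 (shift z))) _.
  rewrite -{1}(wcons_shift z); exact: cons_any.
apply: rt_trans h0 _; exact: cons_any.
Qed.

Lemma orbit_consE p (z y : word p) (a : 'I_p.+1) :
  Defs.in_orbit z (wcons a y) <-> Defs.in_orbit (shift z) y.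
Proof. by split => [/orbit_shift //|/orbit_cons]. Qed.

Definition Wiso p (z w : word p) (f : word p -> word p) :=
  bij_on (Defs.in_orbit z) (Defs.in_orbit w) f /\
  (forall x y, Defs.in_orbit z x -> Defs.in_orbit z y -> (step x y <-> step (f x) (f y))).

Lemma hubE p (x : word p) : x 0 = ord0 -> x = wcons ord0 (shift x).
Proof. by move=> h; rewrite -{1}(wcons_shift x) h. Qed.

Lemma iso_W p (z w : word p) : schreier_iso z w -> exists f, Wiso z w f.
Proof.
case=> f [g [bf [g1 g2 g3] gE]]; exists f; split => //.
have bf1 := bf; case: bf1 => [f1 f2 f3].
move=> x y ox oy; split.
  case=> i [hi [->|->]].
    have Ed : is_edge z (x, i) by split.
    have jp := proj2 (g1 _ Ed).
    by case: (gE _ Ed) => /= [[-> ->]|[-> ->]]; exists (g (x, i)).2; split => //; [left|right].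
  have Ed : is_edge z (y, i) by split.
  have jp := proj2 (g1 _ Ed).
  by case: (gE _ Ed) => /= [[-> ->]|[-> ->]]; exists (g (y, i)).2; split => //; [right|left].
have key : forall x y (j : 'I_p.+1), Defs.in_orbit z x -> Defs.in_orbit z y -> (0 < j)%N ->
    f y = gen j (f x) -> step x y.
  move=> x' y' j ox' oy' hj e.
  have Ed : is_edge w (f x', j) by split => //=; apply: f1.
  case: (g3 _ Ed) => E [EE gEE]; have oE := proj1 EE.
  have oE' : Defs.in_orbit z (gen E.2 E.1).
    by apply: orbit_step oE _; exists E.2; split; [case: EE|left].
  have Ep := proj2 EE.
  case: (gE _ EE); rewrite gEE /= -e.
    case=> e1 e2; have ex : E.1 = x' by apply: f2.
    have ey : gen E.2 E.1 = y' by apply: f2.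
    by exists E.2; split => //; left; rewrite -ey ex.
  case=> e1 e2; have ey : E.1 = y' by apply: f2.
  have ex : gen E.2 E.1 = x' by apply: f2.
  by exists E.2; split => //; right; rewrite -ex ey.
case=> j [hj [e|e]]; first exact: key e.
by apply: step_sym; apply: key e.
Qed.

Lemma W_hub p (hp : (2 <= p)%N) (z w : word p) f : Wiso z w f ->
  forall x, Defs.in_orbit z x -> (x 0 == ord0) = (f x 0 == ord0).
Proof.
case=> _ H x ox; apply/idP/idP => h.
  apply: contraTT h => h; apply/(loop_iff hp); apply/(H x x ox ox); exact/(loop_iff hp).
apply: contraTT h => h; apply/(loop_iff hp); apply/(H x x ox ox); exact/(loop_iff hp).
Qed.

Definition hubnb p (t a b : word p) :=
  [/\ t 0 != ord0, step t (wcons ord0 a), step t (wcons ord0 b) &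
      forall h, h 0 = ord0 -> step t h -> h = wcons ord0 a \/ h = wcons ord0 b].

Lemma hubnb_sym p (t a b : word p) : hubnb t a b -> hubnb t b a.
Proof. by case=> h1 h2 h3 h4; split => // h hh st; case: (h4 h hh st); [right|left]. Qed.

Lemma hubnb_gen p (i : 'I_p.+1) (a : word p) : (0 < i)%N ->
  hubnb (wcons i (gen i a)) a (gen i a).
Proof.
move=> hi; have i0 : i != ord0 by rewrite -pos_ord.
split => //.
- by exists i; split => //; right; rewrite gen_cons eqxx.
- by exists i; split => //; left; rewrite gen_cons (negbTE i0) eqxx.
move=> h h0 [j [hj [e|e]]].
  move: e; rewrite gen_cons (negbTE i0); case: (eqVneq i j) => [_ ->|ij e]; first by right.
  by move: h0; rewrite e /= => e'; move: i0; rewrite e' eqxx.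
move: e; rewrite (hubE h0) gen_cons eqxx => /wcons_inj [e1 e2].
left; congr wcons; move: e2; rewrite -e1 => /(congr1 (geninv i)).
by rewrite !geninvK.
Qed.

Lemma char p (a b : word p) : step a b <-> exists t, hubnb t a b.
Proof.
split.
  case=> i [hi [->|->]]; first by exists (wcons i (gen i a)); exact: hubnb_gen.
  by exists (wcons i (gen i b)); apply: hubnb_sym; exact: hubnb_gen.
case=> t [t0 s1 s2 H]; move: t0 s1 s2 H; rewrite -(wcons_shift t).
move: (t 0) (shift t) => k c k0 s1 s2 H.
have {}k0 : k != ord0 := k0.
have kp : (0 < k)%N by rewrite pos_ord.
case: (step_nonhub k0 s1) => ea; case: (step_nonhub k0 s2) => eb.
-
  subst a b.
  have st : step (wcons k c) (wcons ord0 (geninv k c)).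
    by exists k; split => //; right; rewrite gen_cons eqxx (genK k0).
  case: (H _ erefl st) => /wcons_inj [_ e]; 
  by exists k; split => //; left; rewrite -{2}e (genK k0).
- by subst a; exists k; split => //; right.
- by subst b; exists k; split => //; left.
- have eab : a = b by rewrite -(geninvK k0 a) -(geninvK k0 b) -ea -eb.
  subst b.
  have st : step (wcons k c) (wcons ord0 c).
    by exists k; split => //; left; rewrite gen_cons (negbTE k0) eqxx.
  case: (H _ erefl st) => /wcons_inj [_ e]; subst c;
  by exists k; split => //; left.
Qed.

Definition peelF p (f : word p -> word p) : word p -> word p :=
  fun y => shift (f (wcons ord0 y)).

Lemma peel_hub p (hp : (2 <= p)%N) (z w : word p) f : Wiso z w f ->
  forall y, Defs.in_orbit (shift z) y ->
  Defs.in_orbit w (f (wcons ord0 y)) /\ f (wcons ord0 y) = wcons ord0 (peelF f y).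
Proof.
move=> W y oy; have oz : Defs.in_orbit z (wcons ord0 y) by apply/orbit_consE.
split; first by case: W => [[f1 _ _] _]; apply: f1.
apply: hubE; apply/eqP; rewrite -(W_hub hp W oz) //.
Qed.

Lemma peel p (hp : (2 <= p)%N) (z w : word p) f : Wiso z w f ->
  Wiso (shift z) (shift w) (peelF f).
Proof.
move=> W; have W' := W; case: W' => [[f1 f2 f3] H].
have ph := peel_hub hp W.
have oc : forall y, Defs.in_orbit (shift z) y -> Defs.in_orbit z (wcons ord0 y).
  by move=> y oy; apply/orbit_consE.
split; first split.
- move=> y oy; case: (ph y oy) => o e; move: o; rewrite e; exact: (proj1 (orbit_consE _ _ _)).
- move=> y y' oy oy' e.
  have : f (wcons ord0 y) = f (wcons ord0 y') by rewrite (proj2 (ph y oy)) (proj2 (ph y' oy')) e.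
  by move/(f2 _ _ (oc _ oy) (oc _ oy'))/wcons_inj => [_].
- move=> s os; have ow : Defs.in_orbit w (wcons ord0 s) by apply/orbit_consE.
  case: (f3 _ ow) => x [ox fx].
  have x0 : x 0 = ord0.
    by apply/eqP; rewrite (W_hub hp W ox) fx.
  exists (shift x); split; first exact: orbit_shift.
  by rewrite /peelF -(hubE x0) fx.
move=> y y' oy oy'.
case: (ph y oy) => oY eY; case: (ph y' oy') => oY' eY'.
have hz : forall t, Defs.in_orbit z t -> step t (wcons ord0 y) -> Defs.in_orbit z t.
  by [].
split.
  move/char => [t [t0 s1 s2 Ht]].
  have ot : Defs.in_orbit z t by apply: orbit_step (oc _ oy) (step_sym s1).
  apply/char; exists (f t); split.
  - by rewrite -(W_hub hp W ot).
  - by rewrite -eY; apply/(H _ _ ot (oc _ oy)).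
  - by rewrite -eY'; apply/(H _ _ ot (oc _ oy')).
  move=> h h0 st.
  have oh : Defs.in_orbit w h by apply: orbit_step st; apply: f1.
  case: (f3 _ oh) => x [ox fx]; subst h.
  have x0 : x 0 = ord0 by apply/eqP; rewrite (W_hub hp W ox) h0.
  have stx : step t x by apply/(H _ _ ot ox).
  by case: (Ht _ x0 stx) => ->; [left|right].
move/char => [t' [t0 s1 s2 Ht]].
have ot' : Defs.in_orbit w t'.
  by apply: orbit_step oY (step_sym _); rewrite eY.
case: (f3 _ ot') => t [ot ft]; subst t'.
apply/char; exists t; split.
- by rewrite (W_hub hp W ot).
- by apply/(H _ _ ot (oc _ oy)); rewrite eY.
- by apply/(H _ _ ot (oc _ oy')); rewrite eY'.
move=> h h0 st.
have oh : Defs.in_orbit z h by apply: orbit_step st.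
have fh0 : f h 0 = ord0 by apply/eqP; rewrite -(W_hub hp W oh) h0.
case: (Ht _ fh0 (proj1 (H _ _ ot oh) st)) => e; [left|right].
  by apply: f2 => //; [exact: oc|rewrite e eY].
by apply: f2 => //; [exact: oc|rewrite e eY'].
Qed.

Lemma root p (hp : (2 <= p)%N) (z w : word p) f : Wiso z w f ->
  [/\ (z 0 == ord0) = (f z 0 == ord0),
      z 0 == ord0 -> peelF f (shift z) = shift (f z) &
      z 0 != ord0 -> peelF f (shift z) = shift (f z) \/
                     peelF f (shift z) = geninv (f z 0) (shift (f z))].
Proof.
move=> W; have oz : Defs.in_orbit z z by exact: rt_refl.
have hz := W_hub hp W oz.
split => //.
  by move=> /eqP z0; rewrite /peelF -(hubE z0).
move=> z0.
have os : Defs.in_orbit (shift z) (shift z) by exact: rt_refl.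
case: (peel_hub hp W os) => _ e.
have st : step z (wcons ord0 (shift z)).
  exists (z 0); split; first by rewrite pos_ord.
  by left; have := gen_cons (z 0) (z 0) (shift z); rewrite wcons_shift (negbTE z0) eqxx => ->.
have oc : Defs.in_orbit z (wcons ord0 (shift z)) by apply: orbit_step st.
have := proj1 (proj2 W _ _ oz oc) st; rewrite e -{1}(wcons_shift (f z)).
have fz0 : f z 0 != ord0 by rewrite -hz.
case/(step_nonhub fz0) => [->|e']; first by left.
by right; rewrite e' (geninvK fz0).
Qed.

Definition Good p (w v z : word p) := exists f, Wiso z w f /\ f z = v.

Definition dec (P : Prop) : bool := if excluded_middle_informative P then true else false.
Lemma decP (P : Prop) : reflect P (dec P).
Proof. by rewrite /dec; case: excluded_middle_informative => h; constructor. Qed.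

Definition N2 p (v : word p) := if v 0 == ord0 then shift v else geninv (v 0) (shift v).

Lemma Good_step p (hp : (2 <= p)%N) (w v z : word p) : Good w v z ->
  (z 0 == ord0) = (v 0 == ord0) /\
  (Good (shift w) (shift v) (shift z) \/ Good (shift w) (N2 v) (shift z)).
Proof.
case=> f [W <-]; have W' := peel hp W.
case: (root hp W) => h1 h2 h3; split => //.
case: (boolP (z 0 == ord0)) => z0.
  by left; exists (peelF f); split => //; rewrite h2.
case: (h3 z0) => e; first by left; exists (peelF f).
right; exists (peelF f); split => //; rewrite e /N2.
by have -> : (f z 0 == ord0) = false by rewrite -h1 (negbTE z0).
Qed.

Definition allowed p (w v : word p) (u : seq 'I_p.+1) :=
  dec (exists z, Good w v z /\ cylinder u z).

Lemma allowed_cons p (hp : (2 <= p)%N) (w v : word p) a u : allowed w v (a :: u) ->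
  (a == ord0) = (v 0 == ord0) /\
  (allowed (shift w) (shift v) u \/ allowed (shift w) (N2 v) u).
Proof.
move/decP => [z [G c]].
have z0 : z 0 = a by apply: (c 0).
have cs : cylinder u (shift z) by move=> k hk; apply: (c k.+1).
case: (Good_step hp G) => e [G'|G']; rewrite -z0; split => //.
  by left; apply/decP; exists (shift z).
by right; apply/decP; exists (shift z).
Qed.

Fixpoint all_words p n : seq (seq 'I_p.+1) :=
  if n is n'.+1 then [seq a :: u | a <- enum 'I_p.+1, u <- all_words p n'] else [:: [::]].

Lemma all_wordsP p n (u : seq 'I_p.+1) : size u = n -> u \in all_words p n.
Proof.
elim: n u => [|n IH] [|a u] //= [e].
by apply: (allpairs_f (fun a u => a :: u)); [rewrite mem_enum|exact: IH].
Qed.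

Lemma all_words_size p n (u : seq 'I_p.+1) : u \in all_words p n -> size u = n.
Proof.
elim: n u => [|n IH] u /=; first by rewrite inE => /eqP ->.
by case/allpairsP => -[a u'] [_ h ->] /=; rewrite (IH _ h).
Qed.

Definition cnt p n (w v : word p) := (\sum_(u <- all_words p n) allowed w v u)%N.

Fixpoint Bp p n : nat * nat :=
  if n is n'.+1 then ((Bp p n').2, p * ((Bp p n').1 + (Bp p n').2))%N else (1, 1)%N.

Lemma Bh_le p (hp : (2 <= p)%N) n : ((Bp p n).1 <= (Bp p n).2)%N.
Proof.
elim: n => //= n IH.
apply: leq_trans (_ : (Bp p n).1 + (Bp p n).2 <= _)%N; first exact: leq_addl.
by rewrite leq_pmull // ltnW.
Qed.

Lemma sum_status p (b : bool) :
  (\sum_(a <- enum 'I_p.+1) ((a == ord0) == b))%N = if b then 1%N else p.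
Proof.
rewrite big_enum /= big_ord_recl /=.
have -> : (\sum_(i < p) ((lift ord0 i == ord0) == b))%N = (\sum_(i < p) (~~ b : nat))%N.
  by apply: eq_bigr => i _; case: b.
rewrite big_const_ord; case: b => /=; elim: p => //= n; rewrite !add0n => -> //.
Qed.

Lemma N2_status p (v : word p) : v 0 != ord0 -> shift v <> N2 v ->
  (shift v 0 == ord0) = ~~ (N2 v 0 == ord0).
Proof.
move=> v0; rewrite /N2 (negbTE v0); move: (shift v) (v 0) v0 => s k k0.
rewrite -(wcons_shift s); move: (s 0) (shift s) => a y.
rewrite geninv_cons.
case: (eqVneq a k) => [->|ak] /=; first by rewrite (negbTE k0).
case: (eqVneq a ord0) => [->|a0] /=; first by rewrite (negbTE k0).
by move=> h; exfalso; apply: h.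
Qed.

Lemma cnt_bound p (hp : (2 <= p)%N) n : forall (w v : word p),
  (cnt n w v <= if v 0 == ord0 then (Bp p n).1 else (Bp p n).2)%N.
Proof.
elim: n => [|n IH] w v.
  by rewrite /cnt /= big_cons big_nil addn0; case: ifP => _; case: (allowed _ _ _).
rewrite /cnt /= big_allpairs_dep /=.
set c := fun a : 'I_p.+1 => ((a == ord0) == (v 0 == ord0)).
set d := dec (shift v <> N2 v).
set A := cnt n (shift w) (shift v).
set B := cnt n (shift w) (N2 v).
have step1 : (\sum_(a <- enum 'I_p.+1) \sum_(u <- all_words p n) allowed w v (a :: u)
   <= \sum_(a <- enum 'I_p.+1) (c a * (A + d * B)))%N.
  apply: leq_sum => a _.
  rewrite /A /B /cnt big_distrr -big_split /= big_distrr /=.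
  apply: leq_sum => u _.
  case: (boolP (allowed w v (a :: u))) => // al.
  case: (allowed_cons hp al) => e [h|h].
    by rewrite /c e eqxx mul1n h add1n.
  rewrite /c e eqxx mul1n h muln1.
  case: (boolP d) => dd; first by rewrite /= addn1.
  have ed : shift v = N2 v.
    by apply: NNPP => ne; move: dd; rewrite /d; case: (decP (shift v <> N2 v)).
  by rewrite ed h.
apply: (leq_trans step1); rewrite -big_distrl /= sum_status.
have IHA := IH (shift w) (shift v); have IHB := IH (shift w) (N2 v).
have hle := Bh_le hp n.
case: (boolP (v 0 == ord0)) => v0 /=.
  have eN : N2 v = shift v by rewrite /N2 v0.
  have -> : d = false by apply/negP => /decP; apply.
  rewrite mul0n addn0 mul1n.
  by apply: (leq_trans IHA); case: ifP.
rewrite leq_mul2l; apply/orP; right.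
case: (boolP d) => dd.
  rewrite mul1n; have hs := N2_status v0 (elimT (decP _) dd).
  move: IHA IHB; rewrite -/A -/B hs.
  by case: (N2 v 0 == ord0) => /= h1 h2; [rewrite addnC|]; apply: leq_add.
rewrite mul0n addn0; apply: (leq_trans IHA).
by case: ifP => _; [apply: leq_addr|apply: leq_addl].
Qed.

Definition TT p := (p * p + 3 * p + 1)%N.

Lemma Bn_pow p n : ((Bp p n).2 * (p + 2) ^ n <= 2 * TT p ^ n)%N /\
                   ((Bp p n.+1).2 * (p + 2) ^ n.+1 <= 2 * TT p ^ n.+1)%N.
Proof.
elim: n => [|n [IH1 IH2]].
  by rewrite /= !expn0 !expn1 /TT; split; lia.
split => //.
have -> : (Bp p n.+2).2 = (p * ((Bp p n).2 + (Bp p n.+1).2))%N by [].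
set X := ((Bp p n).2 * (p + 2) ^ n)%N in IH1.
set Y := ((Bp p n.+1).2 * (p + 2) ^ n.+1)%N in IH2.
have e : (p * ((Bp p n).2 + (Bp p n.+1).2) * (p + 2) ^ n.+2 =
          p * (p + 2) * (p + 2) * X + p * (p + 2) * Y)%N.
  by rewrite /X /Y !expnS; ring.
rewrite e.
set s := (p + 2)%N in X Y e IH1 IH2 *.
set T := TT p in IH1 IH2 *.
have key : (p * s * s + p * s * T <= T * T)%N by rewrite /s /T /TT; nia.
apply: leq_trans (_ : p * s * s * (2 * T ^ n) + p * s * (2 * T ^ n.+1) <= _)%N.
  by apply: leq_add; apply: leq_mul.
rewrite !expnS.
have -> : (p * s * s * (2 * T ^ n) + p * s * (2 * (T * T ^ n)) =
           (p * s * s + p * s * T) * (2 * T ^ n))%N by ring.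
have -> : (2 * (T * (T * T ^ n)) = (T * T) * (2 * T ^ n))%N by ring.
by apply: leq_mul.
Qed.

Lemma pow_bern T n : ((T + n) * T ^ n <= T * (T + 1) ^ n)%N.
Proof.
elim: n => [|n IH]; first by rewrite addn0 !expn0.
rewrite !expnS.
apply: leq_trans (_ : (T + n) * T ^ n * (T + 1) <= _)%N.
  have -> : ((T + n.+1) * (T * T ^ n) = (T + n) * T ^ n * T + T * T ^ n)%N by ring.
  have -> : ((T + n) * T ^ n * (T + 1) = (T + n) * T ^ n * T + (T + n) * T ^ n)%N by ring.
  by rewrite leq_add2l leq_mul2r leq_addr orbT.
have -> : (T * ((T + 1) * (T + 1) ^ n) = T * (T + 1) ^ n * (T + 1))%N by ring.
by rewrite leq_mul2r IH orbT.
Qed.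

Lemma Bn_decay p n : ((Bp p n).2 * (TT p + n) <= 2 * TT p * p.+1 ^ n)%N.
Proof.
have h1 := proj1 (Bn_pow p n).
have h2 := pow_bern (TT p) n.
have eT : (TT p + 1 = p.+1 * (p + 2))%N by rewrite /TT; ring.
rewrite eT expnMn in h2.
rewrite -(@leq_pmul2r ((p + 2) ^ n)); last by rewrite expn_gt0 addn2.
apply: leq_trans (_ : 2 * TT p ^ n * (TT p + n) <= _)%N.
  have -> : ((Bp p n).2 * (TT p + n) * (p + 2) ^ n = (Bp p n).2 * (p + 2) ^ n * (TT p + n))%N by ring.
  by rewrite leq_mul2r h1 orbT.
have -> : (2 * TT p ^ n * (TT p + n) = 2 * ((TT p + n) * TT p ^ n))%N by ring.
have -> : (2 * TT p * p.+1 ^ n * (p + 2) ^ n = 2 * (TT p * (p.+1 ^ n * (p + 2) ^ n)))%N by ring.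
by rewrite leq_mul2l h2 orbT.
Qed.

Import Order.TTheory GRing.Theory Num.Theory.
Local Open Scope ring_scope.

Definition wt p (u : seq 'I_p.+1) : rat := (((p.+1) ^ size u)%N%:R)^-1.

Lemma sum_count T (P : pred T) (s : seq T) : (\sum_(u <- s) (P u : nat))%N = count P s.
Proof. by elim: s => [|a s IH]; rewrite ?big_nil ?big_cons ?IH. Qed.

Lemma Bp_pos p n : (0 < p)%N -> (0 < (Bp p n).1)%N /\ (0 < (Bp p n).2)%N.
Proof. move=> p0; elim: n => //= n [h1 h2]; split => //; nia. Qed.

Lemma rat_bound (K M P A : nat) (eps : rat) : (0 < M)%N -> (0 < P)%N ->
  (K * M <= A * P)%N -> ((A%:R : rat) < eps * M%:R) -> ((P%:R : rat)^-1 *+ K <= eps).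
Proof.
move=> M0 P0 h1 h2.
have hM : (0 : rat) < M%:R by rewrite ltr0n.
have hP : (0 : rat) < P%:R by rewrite ltr0n.
have h1' : ((K%:R : rat) * M%:R <= A%:R * P%:R) by rewrite -!natrM ler_nat.
rewrite -[_ *+ K]mulr_natr -(ler_pM2r hP) mulrAC mulVf ?mul1r; last by rewrite gt_eqF.
rewrite -(ler_pM2r hM).
apply: le_trans h1' _.
have : ((A%:R : rat) * P%:R < eps * M%:R * P%:R) by rewrite ltr_pM2r.
move/ltW; by rewrite mulrAC.
Qed.

Lemma Good_cover p (hp : (2 <= p)%N) (w v : word p) (eps : rat) : 0 < eps ->
  exists L : seq (seq 'I_p.+1), L != [::] /\
    (forall z, Good w v z -> exists2 u, u \in L & cylinder u z) /\
    \sum_(u <- L) wt u <= eps.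
Proof.
move=> e0.
set T := TT p.
have hb : 0 <= ((4 * T)%N%:R : rat) / eps by rewrite divr_ge0 // ltW.
set n := Num.Def.archi_bound (((4 * T)%N%:R : rat) / eps).
have hn := archi_boundP hb; rewrite -/n in hn.
exists (nseq n ord0 :: [seq u <- all_words p n | allowed w v u]); split => //; split.
  move=> z G; exists (mkseq z n).
    rewrite in_cons; apply/orP; right; rewrite mem_filter; apply/andP; split.
      apply/decP; exists z; split => // k; rewrite size_mkseq => hk.
      by rewrite nth_mkseq.
    by apply: all_wordsP; rewrite size_mkseq.
  by move=> k; rewrite size_mkseq => hk; rewrite nth_mkseq.
rewrite big_cons big_filter.
have -> : \sum_(i <- all_words p n | allowed w v i) wt i =
          \sum_(i <- all_words p n | allowed w v i) (((p.+1) ^ n)%N%:R)^-1.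
  by rewrite big_seq_cond [RHS]big_seq_cond; apply: eq_bigr => u /andP[/all_words_size hu _]; rewrite /wt hu.
rewrite big_const_seq /wt size_nseq.
have -> : forall (x : rat) k, iter k (+%R x) 0 = x *+ k.
  by move=> x; elim => //= k ->; rewrite mulrS.
rewrite -mulrS.
have p0 : (0 < p)%N by apply: leq_trans hp.
apply: (@rat_bound _ (T + n) _ (4 * T)).
- by rewrite addn_gt0 /T /TT; apply/orP; left; lia.
- by rewrite expn_gt0.
- have hc : (count (allowed w v) (all_words p n) <= (Bp p n).2)%N.
    rewrite -sum_count; apply: leq_trans (cnt_bound hp n w v) _.
    by case: ifP => _ //; apply: Bh_le.
  have hB := Bn_decay p n.
  have hpos := proj2 (Bp_pos n p0).
  apply: leq_trans (_ : (2 * (Bp p n).2 * (T + n) <= _)%N).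
    by rewrite leq_mul2r; apply/orP; right; lia.
  rewrite -mulnA; move: hB; rewrite -/T; nia.
- apply: lt_le_trans (_ : eps * n%:R <= _).
    by rewrite -ltr_pdivrMl // mulrC.
  by rewrite ler_pM2l // ler_nat leq_addl.
Qed.

Lemma geom (eps : rat) N a :
  \sum_(m <- iota a N) eps / 2%:R ^+ m.+1 = eps / 2%:R ^+ a - eps / 2%:R ^+ (a + N).
Proof.
elim: N a => [|N IH] a; first by rewrite big_nil addn0 subrr.
rewrite /= big_cons IH addnS -addSn.
have h2 : (2%:R : rat) != 0 by [].
rewrite !exprS; field. by rewrite !expf_neq0.
Qed.

Lemma wt_ge0 p (u : seq 'I_p.+1) : 0 <= wt u.
Proof. by rewrite /wt invr_ge0 ler0n. Qed.

Lemma union_null p (A : nat -> word p -> Prop) :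
  (forall m (eps : rat), 0 < eps -> exists L : seq (seq 'I_p.+1), L != [::] /\
    (forall z, A m z -> exists2 u, u \in L & cylinder u z) /\
    \sum_(u <- L) wt u <= eps) ->
  nu_null (fun z => exists m, A m z).
Proof.
move=> H eps e0.
have epos : forall m : nat, 0 < eps / 2%:R ^+ m.+1.
  by move=> m; rewrite divr_gt0 // exprn_gt0.
pose Lf m := proj1_sig (constructive_indefinite_description _ (H m _ (epos m))).
have LfP : forall m, [/\ Lf m != [::],
    (forall z, A m z -> exists2 u, u \in Lf m & cylinder u z) &
    \sum_(u <- Lf m) wt u <= eps / 2%:R ^+ m.+1].
  by move=> m; rewrite /Lf; case: constructive_indefinite_description => L [h1 [h2 h3]].
pose F N := flatten [seq Lf m | m <- iota 0 N].
have FS : forall N, F N.+1 = F N ++ Lf N.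
  by move=> N; rewrite /F -[N.+1]addn1 iotaD map_cat flatten_cat /= cats0.
have sizeF : forall N, (N <= size (F N))%N.
  elim => // N IH; rewrite FS size_cat.
  case: (LfP N) => ne _ _; rewrite -addn1 leq_add //; by case: (Lf N) ne.
have Fpre : forall N M, (N <= M)%N -> exists r, F M = F N ++ r.
  move=> N M /subnKC <-; elim: (M - N)%N => [|k [r IH]]; first by exists [::]; rewrite addn0 cats0.
  by exists (r ++ Lf (N + k)); rewrite addnS FS IH catA.
pose U n := nth [::] (F n.+1) n.
have Ueq : forall n N, (n < N)%N -> U n = nth [::] (F N) n.
  move=> n N hn; case: (Fpre _ _ hn) => r ->; rewrite nth_cat.
  by have := sizeF n.+1; case: ltnP.
exists U; split.
  move=> z [m Am]; case: (LfP m) => _ cov _; case: (cov z Am) => u uin cu.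
  exists (size (F m) + index u (Lf m))%N.
  have hm := sizeF m.
  rewrite (Ueq _ (size (F m) + index u (Lf m)).+1 (ltnSn _)).
  have hle : (m.+1 <= (size (F m) + index u (Lf m)).+1)%N by rewrite ltnS; apply: leq_trans hm (leq_addr _ _).
  case: (Fpre _ _ hle) => r ->; rewrite FS -catA nth_cat ltnNge leq_addr /= addKn nth_cat index_mem uin.
  by rewrite nth_index.
move=> N.
apply: le_trans (_ : \sum_(x <- F N) wt x <= _).
  rewrite -(cat_take_drop N (F N)) big_cat /=.
  apply: le_trans (_ : \sum_(x <- take N (F N)) wt x <= _); last first.
    by rewrite lerDl; apply: sumr_ge0 => x _; exact: wt_ge0.
  rewrite (big_nth [::]) size_take.
  have -> : (if (N < size (F N))%N then N else size (F N)) = N.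
    by case: ltnP => // h; apply/eqP; rewrite eqn_leq h sizeF.
  rewrite big_mkord; apply: ler_sum => i _.
  by rewrite nth_take // (Ueq _ _ (ltn_ord i)).
rewrite /F big_flatten /= big_map.
apply: le_trans (_ : \sum_(m <- iota 0 N) eps / 2%:R ^+ m.+1 <= _).
  by apply: ler_sum => m _; case: (LfP m).
rewrite geom expr0 divr1 gerBl divr_ge0 // ?ltW // ?exprn_gt0 //.
Qed.

Definition reach p (l : seq (bool * 'I_p.+1)) (x : word p) : word p :=
  foldr (fun bi acc => if bi.1 then gen bi.2 acc else geninv bi.2 acc) x l.

Lemma reach_orbit p (a b : word p) : clos_refl_trans _ (@step p) a b ->
  exists l, b = reach l a.
Proof.
elim=> [x y [i [hi [e|e]]]|x|x y z _ [l1 e1] _ [l2 e2]].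
- by exists [:: (true, i)].
- exists [:: (false, i)]; rewrite /= e geninvK //; by rewrite -pos_ord.
- by exists [::].
- by exists (l2 ++ l1); rewrite /reach foldr_cat -/(reach l1 x) -e1 e2.
Qed.

Theorem corollary4p25 (p : nat) (hp : (2 <= p)%N) (w : word p) :
  nu_null (Iset w).
Proof.
pose vs m := reach (odflt [::] (unpickle m)) w.
have H := @union_null p (fun m => Good w (vs m)) (fun m eps e0 => Good_cover hp w (vs m) e0).
move=> eps e0; case: (H eps e0) => U [cov sm]; exists U; split => // z Iz.
apply: cov; case: (iso_W Iz) => f W.
have oz : Defs.in_orbit z z by exact: rt_refl.
have ofz : Defs.in_orbit w (f z) by case: W => [[f1 _ _] _]; apply: f1.
case: (reach_orbit ofz) => l el.
exists (pickle l); exists f; split => //.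
by rewrite /vs pickleK /= -el.
Qed.
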